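(* Let $\mathcal B$ be \textsc{AlternatingOracle}. Then for every input $(\sigma,\omega)$ and every realization of its random choices, $$\mathrm{OBJ}_{\mathcal B}\le3\cdot\mathrm{OPT}+3\eta.$$
   Context: Caching with predictions. A cache of capacity $k$ starts empty; requests $\sigma(1),\dots,\sigma(T)$ are processed online; $\nu(t)=\min\{s>t:\sigma(s)=\sigma(t)\}$ ($T+1$ if none); with request $t$ the algorithm receives a prediction $\omega(t)$ of $\nu(t)$; $\eta=\sum_{t=1}^T|\nu(t)-\omega(t)|$. On a hit nothing happens; on a miss the page is loaded, and if the cache is full one cached page is first evicted. $\mathrm{OBJ}_{\mathcal Q}$ is the number of misses of $\mathcal Q$; $\mathrm{OPT}$ is the number of misses of Belady's optimal offline algorithm. Cached pages are identified by the index of their most recent request: $\mathcal I(t)$ is the set of indices $\max\{t'\le t:\sigma(t')=s\}$ over cached pages $s$ after request $t$. \textsc{AlternatingOracle}: on a miss with full cache at time $t$ one of three rules evicts a page: BlindOracle (evict cached $\sigma(i)$, $i\in\mathcal I(t-1)$, with maximal $\omega(i)$); RandomAlg (evict a uniformly random cached page); Corrector (with $W=\{i\in\mathcal I(t-1):\omega(i)<t\}$, evict $\sigma(i)$, $i\in W$, with minimal $\omega(i)$ if $W\ne\emptyset$, otherwise evict as BlindOracle). If $\sigma(t)$ was never requested before, BlindOracle is used; otherwise, if the most recent eviction of page $\sigma(t)$ used BlindOracle / RandomAlg / Corrector, then at time $t$ RandomAlg / Corrector / BlindOracle is used, respectively. *)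

(* Defs.v *)
From mathcomp Require Import all_boot.
Set Implicit Arguments. Unset Strict Implicit. Unset Printing Implicit Defensive.

Section Caching.
Variable P : eqType.
Variable sigma : nat -> P.        (* requests sigma 1, ..., sigma T (sigma 0 unused) *)

Definition nu (T t : nat) : nat :=
  head T.+1 [seq s <- iota t.+1 (T - t) | sigma s == sigma t].

Definition eta (omega : nat -> nat) (T : nat) : nat :=
  \sum_(1 <= t < T.+1) ((nu T t - omega t) + (omega t - nu T t)).

Definition last_req (n : nat) (s : P) : nat :=
  \max_(1 <= t' < n.+1 | sigma t' == s) t'.

Definition requested_before (t : nat) : bool :=
  has (fun t' => sigma t' == sigma t) (iota 1 t.-1).

(* number of misses of a run described by its cache contents after each step;
   cache t = set of pages in the cache after request t *)
Definition misses (T : nat) (cache : nat -> seq P) : nat :=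
  count (fun t => sigma t \notin cache t.-1) (iota 1 T).

Inductive rule := BlindOracle | RandomAlg | Corrector.

Definition next_rule (r : rule) : rule :=
  match r with
  | BlindOracle => RandomAlg
  | RandomAlg => Corrector
  | Corrector => BlindOracle
  end.

(* ev t = Some (p, r) : at time t page p was evicted using rule r;
   last_ev ev p n = rule of the most recent eviction of p among times n, ..., 1 *)
Fixpoint last_ev (ev : nat -> option (P * rule)) (p : P) (n : nat) : option rule :=
  match n with
  | 0 => None
  | n'.+1 =>
      match ev n with
      | Some (q, r) => if q == p then Some r else last_ev ev p n'
      | None => last_ev ev p n'
      end
  end.

Definition rule_at (ev : nat -> option (P * rule)) (t : nat) : rule :=
  if ~~ requested_before t then BlindOracle
  else match last_ev ev (sigma t) t.-1 with
       | Some r => next_rule r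
       | None => BlindOracle
       end.

Definition blind_ok (omega : nat -> nat) (t : nat) (C : seq P) (p : P) : Prop :=
  p \in C /\ forall q, q \in C -> omega (last_req t.-1 q) <= omega (last_req t.-1 p).

Definition random_ok (C : seq P) (p : P) : Prop := p \in C.

Definition corrector_ok (omega : nat -> nat) (t : nat) (C : seq P) (p : P) : Prop :=
  let W := [seq q <- C | omega (last_req t.-1 q) < t] in
  if W is [::] then blind_ok omega t C p
  else p \in W /\ forall q, q \in W -> omega (last_req t.-1 p) <= omega (last_req t.-1 q).

Definition rule_ok (r : rule) (omega : nat -> nat) (t : nat) (C : seq P) (p : P) : Prop :=
  match r with
  | BlindOracle => blind_ok omega t C p
  | RandomAlg => random_ok C p
  | Corrector => corrector_ok omega t C p
  end.

(* A run (any realization of random choices and any tie-breaking) of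
   AlternatingOracle with cache capacity k on requests 1..T. *)
Definition AO_run (omega : nat -> nat) (k T : nat)
    (cache : nat -> seq P) (ev : nat -> option (P * rule)) : Prop :=
  cache 0 = [::] /\
  forall t, 1 <= t <= T ->
    let C := cache t.-1 in
    if sigma t \in C then cache t = C /\ ev t = None
    else if size C < k then cache t = sigma t :: C /\ ev t = None
    else exists p, [/\ ev t = Some (p, rule_at ev t),
                       rule_ok (rule_at ev t) omega t C p
                     & cache t = sigma t :: rem p C].

(* A run (any tie-breaking) of Belady's algorithm: on a miss with full cache,
   evict the cached page whose next request is furthest in the future. *)
Definition belady_run (k T : nat) (cache : nat -> seq P) : Prop :=
  cache 0 = [::] /\
  forall t, 1 <= t <= T ->
    let C := cache t.-1 in
    if sigma t \in C then cache t = C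
    else if size C < k then cache t = sigma t :: C
    else exists p, [/\ p \in C,
                       forall q, q \in C -> nu T (last_req t.-1 q) <= nu T (last_req t.-1 p)
                     & cache t = sigma t :: rem p C].

End Caching.

(* Main.v *)
Require Import Defs.
From mathcomp Require Import all_boot.
From mathcomp Require Import zify.
Set Implicit Arguments. Unset Strict Implicit. Unset Printing Implicit Defensive.

Lemma head_filter_iota (p : pred nat) d a n :
  let h := head d [seq u <- iota a n | p u] in
  (h = d /\ forall u, a <= u < a + n -> ~~ p u) \/
  [/\ a <= h < a + n, p h & forall u, a <= u < h -> ~~ p u].
Proof.
elim: n a => [|n IH] a /=.
  by left; split=> // u; lia.
case: ifP => pa /=.
  by right; split=> //; [lia| move=> u; lia].
have [[-> H]|[H1 H2 H3]] := IH a.+1.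
  left; split=> // u Hu; case: (eqVneq u a) => [->|ne]; first by rewrite pa.
  by apply: H; lia.
right; split=> //; first lia.
move=> u Hu; case: (eqVneq u a) => [->|ne]; first by rewrite pa.
by apply: H3; lia.
Qed.
Section NX.
Variables (P : eqType) (sigma : nat -> P) (T : nat).

Definition nx (t : nat) (q : P) : nat :=
  head T.+1 [seq u <- iota t.+1 (T - t) | sigma u == q].

Lemma nx_spec t q : t <= T ->
  [/\ t < nx t q, nx t q <= T.+1, (nx t q <= T -> sigma (nx t q) = q)
    & forall w, t < w < nx t q -> sigma w != q].
Proof.
move=> tT; rewrite /nx.
have [[-> H]|[H1 H2 H3]] := head_filter_iota (fun u => sigma u == q) T.+1 t.+1 (T - t).
  split; [lia | lia | by rewrite ltnn | move=> w Hw; apply: H; lia].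
split; [lia|lia|by move=> _; apply/eqP|].
move=> w Hw; apply: H3; lia.
Qed.

Lemma nx_gt t q : t <= T -> t < nx t q.
Proof. by case/(nx_spec q). Qed.
Lemma nx_le t q : t <= T -> nx t q <= T.+1.
Proof. by case/(nx_spec q). Qed.
Lemma nx_req t q : t <= T -> nx t q <= T -> sigma (nx t q) = q.
Proof. by case/(nx_spec q). Qed.
Lemma nx_min t q w : t <= T -> t < w < nx t q -> sigma w != q.
Proof. by case/(nx_spec q) => _ _ _; apply. Qed.

Lemma nx_char t q m : t <= T -> t < m <= T.+1 -> (m <= T -> sigma m = q) ->
  (forall w, t < w < m -> sigma w != q) -> nx t q = m.
Proof.
move=> tT Hm Hq Hw; have [H1 H2 H3 H4] := nx_spec q tT.
apply/eqP; rewrite eqn_leq; apply/andP; split.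
  rewrite leqNgt; apply/negP=> lt; have := H4 m; rewrite Hq; last lia.
  by rewrite eqxx => H; move: (H ltac:(lia)).
rewrite leqNgt; apply/negP=> lt; have := Hw (nx t q); rewrite H3; last lia.
by rewrite eqxx => H; move: (H ltac:(lia)).
Qed.

Lemma nx_step t q : t < T -> sigma t.+1 != q -> nx t.+1 q = nx t q.
Proof.
move=> tT ne; have [H1 H2 H3 H4] := nx_spec q (ltnW tT).
have Hn : nx t q != t.+1.
  by apply/eqP=> E; move: ne; rewrite -E H3 ?eqxx //; lia.
apply: nx_char => //; first lia.
move=> w Hw; apply: H4; lia.
Qed.

Lemma nx_hit t q : t < T -> sigma t.+1 = q -> nx t q = t.+1.
Proof.
move=> tT E; apply: nx_char; [lia|lia|by []|].
move=> w; lia.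
Qed.

Lemma nx_skip t t' q : t <= t' <= T -> (forall w, t < w <= t' -> sigma w != q) ->
  nx t' q = nx t q.
Proof.
move=> /andP[]; elim: t' => [|t' IH] H1 H2 Hw.
  by have -> : t = 0 by lia.
case: (eqVneq t t'.+1) => [->//|ne].
rewrite nx_step //; last by apply: Hw; lia.
apply: IH; [lia|lia|move=> w Hw'; apply: Hw; lia].
Qed.

Lemma nx_inj t t' q q' : t <= T -> t' <= T -> nx t q = nx t' q' -> nx t q <= T -> q = q'.
Proof.
move=> H1 H2 E Hle; rewrite -(nx_req H1 Hle) E nx_req //; lia.
Qed.
End NX.
Section Run.
Variables (P : eqType) (sigma : nat -> P) (k T : nat) (c : nat -> seq P).

Definition run_ok :=
  c 0 = [::] /\ forall t, 1 <= t <= T ->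
   (sigma t \in c t.-1 /\ c t = c t.-1) \/
   [/\ sigma t \notin c t.-1, size (c t.-1) < k & c t = sigma t :: c t.-1] \/
   [/\ sigma t \notin c t.-1, k <= size (c t.-1) &
       exists p, p \in c t.-1 /\ c t = sigma t :: rem p (c t.-1)].

Hypothesis Hrun : run_ok.

Lemma run_uniq_size t : t <= T -> uniq (c t) /\ size (c t) <= k.
Proof.
case: Hrun => H0 Hs; elim: t => [|t IH] tT; first by rewrite H0.
have [U S] := IH (ltnW tT).
move: (Hs t.+1 ltac:(lia)); rewrite succnK.
case=> [[_ ->]|[[ni sz ->]|[ni sz [p [pin ->]]]]] //=.
  by split; [rewrite /= ni U|lia].
have pos : 0 < size (c t) by move: pin; case: (c t).
split; last by rewrite /= size_rem //; lia.
rewrite /= rem_uniq // andbT; apply/negP=> /mem_rem; by rewrite (negbTE ni).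
Qed.

Lemma run_sub t : 1 <= t <= T -> {subset c t <= sigma t :: c t.-1}.
Proof.
case: Hrun => H0 Hs tT q; have [[_ ->]|[[ni sz ->]|[ni sz [p [pin ->]]]]] := Hs t tT => //.
- by move=> qi; rewrite inE qi orbT.
- rewrite !inE; case/orP=> [->//|]; move/mem_rem => ->; by rewrite orbT.
Qed.

Lemma run_req t : 1 <= t <= T -> sigma t \in c t.
Proof.
case: Hrun => H0 Hs tT; have [[I ->]|[[ni sz ->]|[ni sz [p [pin ->]]]]] := Hs t tT => //;
by rewrite inE eqxx.
Qed.

Lemma run_enter a b q : a <= b <= T -> q \notin c a -> q \in c b ->
  exists w, a < w <= b /\ sigma w = q.
Proof.
elim: b => [|b IH] Hab na inb.
  have E : a = 0 by lia.
  by subst a; rewrite inb in na.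
case: (eqVneq a b.+1) => [E|ne]; first by subst a; rewrite inb in na.
have := @run_sub b.+1 ltac:(lia) q inb; rewrite inE /=; case/orP=> [/eqP ->|inb'].
  by exists b.+1; split=> //; lia.
have [w [Hw Ew]] := IH ltac:(lia) na inb'.
by exists w; split=> //; lia.
Qed.

Lemma run_stay a b q : a <= b <= T -> q \in c b ->
  (forall w, a < w <= b -> sigma w != q) -> q \in c a.
Proof.
move=> Hab inb Hw; apply/negPn/negP => na.
have [w [H1 H2]] := run_enter Hab na inb.
by move: (Hw w H1); rewrite H2 eqxx.
Qed.

Lemma run_requested t q : t <= T -> q \in c t -> exists w, 0 < w <= t /\ sigma w = q.
Proof.
move=> tT qin; have H0 : q \notin c 0 by case: Hrun => -> .
by have := run_enter (a:=0) (b:=t) ltac:(lia) H0 qin.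
Qed.
End Run.
Section LR.
Variables (P : eqType) (sigma : nat -> P) (T : nat).

Lemma last_req0 q : last_req sigma 0 q = 0.
Proof. by rewrite /last_req big_geq. Qed.

Lemma last_req_le n q : last_req sigma n q <= n.
Proof.
rewrite /last_req; apply/bigmax_leqP_seq => i; rewrite mem_index_iota => /andP[_ H] _; lia.
Qed.

Lemma last_reqS n q : last_req sigma n.+1 q = if sigma n.+1 == q then n.+1 else last_req sigma n q.
Proof.
rewrite /last_req big_mkcond big_nat_recr //= -big_mkcond /=.
have := last_req_le n q; rewrite /last_req => H.
by case: ifP => _; [apply/maxn_idPr; lia | rewrite maxn0].
Qed.

Lemma last_req_spec n q : (exists w, 0 < w <= n /\ sigma w = q) ->
  [/\ 0 < last_req sigma n q <= n, sigma (last_req sigma n q) = q &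
      forall w, last_req sigma n q < w <= n -> sigma w != q].
Proof.
elim: n => [|n IH] [w [Hw Ew]]; first lia.
rewrite last_reqS; case: ifP => [/eqP E|ne].
  by split=> //; [lia| move=> w'; lia].
have [|H1 H2 H3] := IH.
  exists w; split=> //; case: (eqVneq w n.+1) => [E|]; last lia.
  by move: ne; rewrite -E Ew eqxx.
split=> //; first lia.
move=> w' Hw'; case: (eqVneq w' n.+1) => [->|]; first by rewrite ne.
by move=> ?; apply: H3; lia.
Qed.

Lemma nu_last n q : n <= T -> (exists w, 0 < w <= n /\ sigma w = q) ->
  nu sigma T (last_req sigma n q) = nx sigma T n q.
Proof.
move=> nT Hex; have [H1 H2 H3] := last_req_spec Hex.
rewrite /nu H2 -/(nx sigma T _ q); symmetry; apply: nx_skip => //; lia.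
Qed.
End LR.
Lemma count_pw (X : eqType) (a b : pred X) (s : seq X) :
  (forall x, x \in s -> a x -> b x) -> count a s <= count b s.
Proof.
elim: s => //= x s IH H.
have H' : forall y, y \in s -> a y -> b y by move=> y ys; apply: H; rewrite inE ys orbT.
have := IH H'; case ax: (a x); last by move=> h; apply: leq_trans h (leq_addl _ _).
by rewrite (H x (mem_head _ _) ax) /= => h; rewrite !add1n ltnS.
Qed.

Lemma count_pw2 (X : eqType) (a b c : pred X) (s : seq X) :
  (forall x, x \in s -> a x -> b x || c x) -> count a s <= count b s + count c s.
Proof.
move=> H; rewrite -count_predUI; apply: leq_trans (leq_addr _ _).
by apply: count_pw => x xs ax; rewrite /= H.
Qed.

Lemma count_surj (X : eqType) (f : X -> X) (a b : pred X) (s : seq X) : uniq s ->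
  (forall x, x \in s -> a x -> exists2 y, (y \in s) && b y & f y = x) ->
  count a s <= count b s.
Proof.
move=> U H; rewrite -!size_filter.
have -> : size [seq x <- s | b x] = size (map f [seq x <- s | b x]) by rewrite size_map.
apply: uniq_leq_size; first by apply: filter_uniq.
move=> x; rewrite mem_filter => /andP[ax xs]; have [y /andP[ys yb] <-] := H x xs ax.
by apply: map_f; rewrite mem_filter yb ys.
Qed.

Definition req (r1 r2 : rule) : bool :=
  match r1, r2 with
  | BlindOracle, BlindOracle | RandomAlg, RandomAlg | Corrector, Corrector => true
  | _, _ => false end.
Lemma reqP r1 r2 : req r1 r2 -> r1 = r2. Proof. by case: r1; case: r2. Qed.
Lemma reqxx r : req r r. Proof. by case: r. Qed.

Lemma last_ev_spec (P : eqType) (ev : nat -> option (P * rule)) q n r :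
  last_ev ev q n = Some r -> exists e, [/\ 0 < e <= n, ev e = Some (q, r) &
    forall e' p' r', e < e' <= n -> ev e' = Some (p', r') -> p' != q].
Proof.
elim: n => [//|n IH] /=.
have lift : last_ev ev q n = Some r -> (forall p' r', ev n.+1 = Some (p', r') -> p' != q) ->
  exists e, [/\ 0 < e <= n.+1, ev e = Some (q, r) &
    forall e' p' r', e < e' <= n.+1 -> ev e' = Some (p', r') -> p' != q].
  move/IH => [e [H1 H2 H3]] Hn; exists e; split=> //; first lia.
  move=> e' p' r' He' E'; case: (eqVneq e' n.+1) => [Ee|ne].
    by subst e'; apply: Hn E'.
  by apply: (H3 e' p' r') => //; lia.
case E: (ev n.+1) => [[q' r']|].
  case: ifP => [/eqP Eq [Er]|ne H].
    subst q' r'; exists n.+1; split=> //; first lia.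
    by move=> e' p' r0 He'; exfalso; lia.
  by apply: lift => // p' r0; rewrite E => -[<- _]; rewrite ne.
by move=> H; apply: lift => // p' r0; rewrite E.
Qed.

Lemma last_ev_some (P : eqType) (ev : nat -> option (P * rule)) q n e r :
  0 < e <= n -> ev e = Some (q, r) -> exists r', last_ev ev q n = Some r'.
Proof.
elim: n => [|n IH] He E; first lia.
rewrite /=; case E': (ev n.+1) => [[q' r']|].
  case: ifP => [_|ne]; first by exists r'.
  apply: IH => //; case: (eqVneq e n.+1) => [Ee|]; last lia.
  by move: E'; rewrite -Ee E => -[Eq _]; rewrite Eq eqxx in ne.
apply: IH => //; case: (eqVneq e n.+1) => [Ee|]; last lia.
by move: E'; rewrite -Ee E.
Qed.

Lemma rbP (P : eqType) (sigma : nat -> P) t :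
  reflect (exists w, 0 < w < t /\ sigma w = sigma t) (requested_before sigma t).
Proof.
apply: (iffP hasP) => [[w]|[w [Hw E]]].
  rewrite mem_iota => Hw /eqP E; exists w; split=> //; lia.
by exists w; [rewrite mem_iota; lia | rewrite E].
Qed.
Lemma rule_ok_mem (P : eqType) (sigma : nat -> P) r omega t (C : seq P) p :
  rule_ok sigma r omega t C p -> p \in C.
Proof.
case: r => /=; first by case.
  by [].
rewrite /corrector_ok; case E: [seq q <- C | _] => [|a l]; first by case.
by case=> Hp _; move: Hp; rewrite -E mem_filter => /andP[].
Qed.

Lemma mem_rem_neq (P : eqType) (s : seq P) p q : uniq s -> q \in s -> q != p -> q \in rem p s.
Proof. by move=> U qs ne; rewrite (mem_rem_uniq _ U) inE ne qs. Qed.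

Lemma not_mem_rem (P : eqType) (s : seq P) p : uniq s -> p \notin rem p s.
Proof. by move=> U; rewrite (mem_rem_uniq _ U) inE eqxx. Qed.

Section Main.
Variables (P : eqType) (sigma : nat -> P) (omega : nat -> nat)
    (k T : nat) (cacheB : nat -> seq P) (ev : nat -> option (P * rule))
    (cacheOPT : nat -> seq P).
Hypothesis HA : AO_run sigma omega k T cacheB ev.
Hypothesis HO : belady_run sigma k T cacheOPT.

Local Notation CA := cacheB.
Local Notation CO := cacheOPT.
Local Notation nx := (nx sigma T).

Lemma runA : run_ok sigma k T CA.
Proof.
case: HA => H0 Hs; split=> // t tT; have := Hs t tT => /=.
case: ifP => [I [-> _]|ni]; first by left.
case: ifP => [sz [-> _]|sz]; first by right; left.
move/negbT: sz; rewrite -leqNgt => sz.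
case=> p [_ Hok ->]; right; right; split=> //.
by exists p; split=> //; apply: rule_ok_mem Hok.
Qed.

Lemma runO : run_ok sigma k T CO.
Proof.
case: HO => H0 Hs; split=> // t tT; have := Hs t tT => /=.
case: ifP => [I ->|ni]; first by left.
case: ifP => [sz ->|sz]; first by right; left.
move/negbT: sz; rewrite -leqNgt => sz.
case=> p [pin _ ->]; right; right; split=> //.
by exists p.
Qed.

Lemma uniqA t : t <= T -> uniq (CA t). Proof. by move=> tT; case: (run_uniq_size runA tT). Qed.
Lemma sizeA t : t <= T -> size (CA t) <= k. Proof. by move=> tT; case: (run_uniq_size runA tT). Qed.
Lemma uniqO t : t <= T -> uniq (CO t). Proof. by move=> tT; case: (run_uniq_size runO tT). Qed.
Lemma sizeO t : t <= T -> size (CO t) <= k. Proof. by move=> tT; case: (run_uniq_size runO tT). Qed.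

Lemma A_step t : 1 <= t <= T ->
  (sigma t \in CA t.-1 /\ CA t = CA t.-1 /\ ev t = None) \/
  [/\ sigma t \notin CA t.-1, size (CA t.-1) < k, CA t = sigma t :: CA t.-1 & ev t = None] \/
  exists p, [/\ ev t = Some (p, rule_at sigma ev t), sigma t \notin CA t.-1,
     size (CA t.-1) = k, p \in CA t.-1 &
     rule_ok sigma (rule_at sigma ev t) omega t (CA t.-1) p /\
     CA t = sigma t :: rem p (CA t.-1)].
Proof.
case: HA => H0 Hs tT; have := Hs t tT => /=.
case: ifP => [I [-> E]|ni]; first by left.
case: ifP => [sz [-> E]|sz]; first by right; left.
move/negbT: sz; rewrite -leqNgt => sz.
case=> p [E Hok ->]; right; right; exists p; split=> //.
  have := sizeA (t:=t.-1) ltac:(lia); lia.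
by apply: rule_ok_mem Hok.
Qed.

Lemma A_some t p r : 1 <= t <= T -> ev t = Some (p, r) ->
  [/\ r = rule_at sigma ev t, sigma t \notin CA t.-1, size (CA t.-1) = k, p \in CA t.-1 &
     [/\ rule_ok sigma r omega t (CA t.-1) p, CA t = sigma t :: rem p (CA t.-1) & p \notin CA t]].
Proof.
move=> tT E; have [[_ [_ E']]|[[_ _ _ E']|[p' [E' ni sz pin [Hok Ec]]]]] := A_step tT;
  rewrite E' in E => //.
case: E => <- <-; split=> //; split=> //.
rewrite Ec inE negb_or not_mem_rem ?andbT; last by apply: uniqA; lia.
by apply/eqP=> Ep; rewrite -Ep pin in ni.
Qed.

Lemma A_leave a b q : a <= b <= T -> q \in CA a -> q \notin CA b ->
  exists w r, a < w <= b /\ ev w = Some (q, r).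
Proof.
elim: b => [|b IH] Hab ina nb.
  have E : a = 0 by lia.
  by subst a; rewrite ina in nb.
case: (eqVneq a b.+1) => [E|ne]; first by subst a; rewrite ina in nb.
case inb: (q \in CA b); last first.
  have [w [r [H1 H2]]] := IH ltac:(lia) ina (negbT inb).
  by exists w, r; split=> //; lia.
have [[_ [E _]]|[[_ _ E _]|[p [E1 _ _ pin [_ E2]]]]] := A_step (t:=b.+1) ltac:(lia).
- by rewrite /= in E; rewrite E inb in nb.
- by rewrite /= in E; rewrite E inE inb orbT in nb.
rewrite /= in E1 E2 pin.
case: (eqVneq q p) => [Eq|neq].
  by subst q; exists b.+1, (rule_at sigma ev b.+1); split=> //; lia.
have U := uniqA (t:=b) ltac:(lia).
by rewrite E2 inE mem_rem_neq ?orbT in nb.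
Qed.

Lemma inI t : (t \in iota 1 T) = (0 < t <= T).
Proof. by rewrite mem_iota add1n ltnS. Qed.

Definition missA t := sigma t \notin CA t.-1.
Definition compb t := ~~ requested_before sigma t.
Definition Nr r t := (sigma t \notin CA t.-1) && requested_before sigma t &&
  (if last_ev ev (sigma t) t.-1 is Some r' then req r' r else false).
Definition evr r t := if ev t is Some (_, r') then req r' r else false.
Definition retr r t := if ev t is Some (p, r') then req r' r && (nx t.-1 p <= T) else false.

Lemma miss_last t : 0 < t <= T -> sigma t \notin CA t.-1 -> requested_before sigma t ->
  exists r, last_ev ev (sigma t) t.-1 = Some r.
Proof.
move=> tT ni /rbP [w [Hw Ew]].
have inw : sigma t \in CA w by rewrite -Ew; apply: (run_req runA); lia.
have [e [r [He Ee]]] := A_leave (a:=w) (b:=t.-1) ltac:(lia) inw ni.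
by apply: (last_ev_some (e:=e) (r:=r)) => //; lia.
Qed.

Lemma G1 : count missA (iota 1 T) <=
  count compb (iota 1 T) + (count (Nr BlindOracle) (iota 1 T) +
  (count (Nr RandomAlg) (iota 1 T) + count (Nr Corrector) (iota 1 T))).
Proof.
apply: leq_trans (count_pw2 (b := compb)
   (c := fun t => Nr BlindOracle t || (Nr RandomAlg t || Nr Corrector t)) _) _.
  move=> t; rewrite inI => tT mt; rewrite /missA in mt; rewrite /compb; case rb: (requested_before sigma t) => //=.
  have [r Er] := miss_last tT mt rb.
  by rewrite /Nr mt rb Er /=; case: r {Er}.
rewrite leq_add2l; apply: leq_trans (count_pw2 (b := Nr BlindOracle)
   (c := fun t => Nr RandomAlg t || Nr Corrector t) _) _ => //.
rewrite leq_add2l; by apply: count_pw2.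
Qed.

Definition retf e := if ev e is Some (p, _) then nx e.-1 p else 0.

Lemma G2 r : count (Nr r) (iota 1 T) <= count (retr r) (iota 1 T).
Proof.
apply: (count_surj (f := retf)); first by apply: iota_uniq.
move=> t; rewrite inI => tT /andP[/andP[mt rb] Hl].
case El: (last_ev ev (sigma t) t.-1) Hl => [r'|//] /reqP Er; subst r'.
have [e [He Ee Hsp]] := last_ev_spec El.
have [_ _ _ pin [_ _ _]] := A_some (t:=e) ltac:(lia) Ee.
have [_ ne _ _ _] := A_some (t:=e) ltac:(lia) Ee.
have Hnx : nx e.-1 (sigma t) = t.
  apply: nx_char; [lia|lia|by []|] => w Hw.
  case: (eqVneq w e) => [->|new].
    by apply/eqP => E; move: ne; rewrite E pin.
  apply/negP=> /eqP Ew.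
  have inw : sigma t \in CA w by rewrite -Ew; apply: (run_req runA); lia.
  have [e' [r' [He' Ee']]] := A_leave (a:=w) (b:=t.-1) ltac:(lia) inw mt.
  by move: (Hsp e' _ _ ltac:(lia) Ee'); rewrite eqxx.
exists e; last by rewrite /retf Ee.
by rewrite inI /retr Ee reqxx Hnx; apply/andP; split; lia.
Qed.

Lemma G3 r : count (retr r) (iota 1 T) <= count (evr r) (iota 1 T).
Proof. by apply: count_pw => t _; rewrite /retr /evr; case: (ev t) => [[p r']|] // /andP[]. Qed.

Lemma G4 r0 : req r0 Corrector = false ->
  count (evr (next_rule r0)) (iota 1 T) <= count (Nr r0) (iota 1 T).
Proof.
move=> nC; apply: count_pw => t; rewrite inI => tT.
rewrite /evr; case Ee: (ev t) => [[p r']|//] /reqP Er; subst r'.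
have [Er ni _ _ _] := A_some tT Ee; clear Ee.
rewrite /Nr ni /=; move: Er; rewrite /rule_at.
case: ifP => [_|]; first by case: r0 nC.
move/negbFE => ->; case: (last_ev ev (sigma t) t.-1) => [r1|]; last by case: r0 nC.
by case: r0 nC; case: r1.
Qed.

Lemma Gall : count missA (iota 1 T) <= count compb (iota 1 T) + 3 * count (retr BlindOracle) (iota 1 T).
Proof.
apply: leq_trans G1 _; rewrite leq_add2l.
have h1 := G2 BlindOracle.
have h2 : count (Nr RandomAlg) (iota 1 T) <= count (retr BlindOracle) (iota 1 T).
  apply: leq_trans (G2 _) _; apply: leq_trans (G3 _) _.
  by apply: leq_trans (G4 (r0 := BlindOracle) erefl) h1.
have h3 : count (Nr Corrector) (iota 1 T) <= count (retr BlindOracle) (iota 1 T).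
  apply: leq_trans (G2 _) _; apply: leq_trans (G3 _) _.
  apply: leq_trans (G4 (r0 := RandomAlg) erefl) _.
  apply: leq_trans (G2 _) _; apply: leq_trans (G3 _) _.
  by apply: leq_trans (G4 (r0 := BlindOracle) erefl) h1.
lia.
Qed.
Definition good e := if ev e is Some (p, _) then
  (nx e.-1 p <= T) && all (fun q => nx e.-1 q <= nx e.-1 p) (CA e.-1) else false.
Definition OMnc u := (sigma u \notin CO u.-1) && requested_before sigma u.
Definition keptO t q := q \in CO (nx t q).-1.

Definition InvN t (Us : seq P) (b : P -> P) (cl : seq nat) :=
  [/\ uniq Us, {subset Us <= CA t},
    (forall y, y \in Us -> [/\ b y \notin CA t, nx t y < nx t (b y) &
         forall t', t <= t' < nx t (b y) -> b y \in CO t']),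
    (forall y1 y2, y1 \in Us -> y2 \in Us -> b y1 = b y2 -> y1 = y2)
  & [/\ uniq cl, (forall u, u \in cl -> 0 < u <= T /\ OMnc u) &
       (forall u, u \in cl -> t < u -> nx t (sigma u) = u /\ (sigma u \in CA t -> sigma u \in Us))]].

Definition Inv t Us b cl := InvN t Us b cl /\ size cl = count good (iota 1 t).

Lemma count_iotaS (a : pred nat) t : count a (iota 1 t.+1) = count a (iota 1 t) + a t.+1.
Proof.
have -> : iota 1 t.+1 = iota 1 t ++ [:: t.+1] by rewrite -(addn1 t) iotaD /= addnC.
by rewrite count_cat /= addn0.
Qed.

Lemma ne_far t q : t < T -> t.+1 < nx t q -> sigma t.+1 != q.
Proof. by move=> tT H; apply: (nx_min (T:=T) (t:=t)) => //; lia. Qed.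

Lemma CO_stay t q : t <= T -> keptO t q -> forall t', t <= t' < nx t q -> q \in CO t'.
Proof.
move=> tT Hk t' Ht'; have Hle := nx_le sigma q tT.
apply: (run_stay runO (b := (nx t q).-1)) Hk _; first lia.
move=> w Hw; apply: (nx_min (T:=T) (t:=t)) => //; lia.
Qed.

Lemma new_req t q : t <= T -> q \in CA t -> t < nx t q -> nx t q <= T ->
  requested_before sigma (nx t q).
Proof.
move=> tT qin H1 H2; have [w [Hw Ew]] := run_requested runA tT qin.
apply/rbP; exists w; split; first lia.
by rewrite Ew nx_req.
Qed.

Lemma step_keepN t Us b cl : t < T -> InvN t Us b cl ->
  InvN t.+1 [seq y <- Us | (y != sigma t.+1) && (y \in CA t.+1)] b cl.
Proof.
move=> tT [U1 U2 U3 U4 [C1 C2 C3]].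
have sub := @run_sub _ _ _ _ _ runA t.+1 ltac:(lia); rewrite /= in sub.
split.
- exact: filter_uniq.
- by move=> y; rewrite mem_filter => /andP[/andP[]].
- move=> y; rewrite mem_filter => /andP[/andP[ne yin] yU].
  have [b1 b2 b3] := U3 y yU.
  have nb : sigma t.+1 != b y.
    apply: ne_far => //; have := nx_gt sigma y (ltnW tT); lia.
  have ne' : sigma t.+1 != y by rewrite eq_sym.
  rewrite !nx_step //; split=> //.
    by apply/negP => /sub; rewrite inE (negbTE b1) orbF eq_sym (negbTE nb).
  by move=> t' Ht'; apply: b3; lia.
- by move=> y1 y2; rewrite !mem_filter => /andP[_ h1] /andP[_ h2]; apply: U4.
split=> //.
move=> u uin Hu; have [h1 h2] := C3 u uin ltac:(lia).
have ne : sigma t.+1 != sigma u by apply: ne_far => //; lia.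
rewrite nx_step // h1; split=> // inu.
have inu' : sigma u \in CA t by move: (sub _ inu); rewrite inE eq_sym (negbTE ne).
by rewrite mem_filter eq_sym ne inu h2.
Qed.

Lemma step_keep t Us b cl : t < T -> Inv t Us b cl -> good t.+1 = false ->
  Inv t.+1 [seq y <- Us | (y != sigma t.+1) && (y \in CA t.+1)] b cl.
Proof.
move=> tT [I S] ng; split; first exact: step_keepN.
by rewrite count_iotaS ng addn0.
Qed.
Lemma claim_new t Us b cl q : t < T -> InvN t Us b cl -> q \in CA t -> q \notin Us ->
  nx t q <= T -> ~~ keptO t q ->
  [/\ nx t q \notin cl, 0 < nx t q <= T, OMnc (nx t q) & sigma (nx t q) = q].
Proof.
move=> tT [_ _ _ _ [C1 C2 C3]] qin qU qT nk.
have gt := nx_gt sigma q (ltnW tT).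
have Eq : sigma (nx t q) = q by apply: nx_req => //; lia.
split=> //.
- apply/negP => uin; have [_ h] := C3 _ uin gt; rewrite Eq in h.
  by rewrite (h qin) in qU.
- lia.
- by rewrite /OMnc Eq nk /=; apply: new_req => //; lia.
Qed.

Lemma nx_far t x : t < T -> x \in CA t -> sigma t.+1 \notin CA t -> t.+1 < nx t x.
Proof.
move=> tT xin ni; have gx := nx_gt sigma x (ltnW tT).
case: (eqVneq (nx t x) t.+1) => [E|]; last lia.
have := nx_req (sigma:=sigma) (T:=T) (t:=t) (q:=x) (ltnW tT); rewrite E => /(_ tT) Ex.
by rewrite Ex xin in ni.
Qed.

Lemma step_good t Us b cl : t < T -> Inv t Us b cl -> good t.+1 ->
  exists Us' b' cl', Inv t.+1 Us' b' cl'.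
Proof.
move=> tT [I Sz] g.
have I0 := step_keepN tT I.
set Us0 := [seq y <- Us | _] in I0.
case: (I) => U1 U2 U3 U4 [C1 C2 C3].
move: (g); rewrite /good; case Ee: (ev t.+1) => [[p r]|//] /= /andP[pT pmax].
have tT1 : 0 < t.+1 <= T by rewrite ltn0Sn tT.
have [_ ni sz pin [_ ECA pnot]] := A_some (t:=t.+1) tT1 Ee.
rewrite /= in ni sz pin ECA pnot.
have US := uniqA (t:=t) (ltnW tT).
have sub := @run_sub _ _ _ _ _ runA t.+1 tT1; rewrite /= in sub.
have pne : sigma t.+1 != p by apply/eqP => E; rewrite E pin in ni.
have gp := nx_gt sigma p (ltnW tT).
have Ssz : count good (iota 1 t.+1) = (size cl).+1 by rewrite count_iotaS g -Sz addn1.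
case: I0 => V1 V2 V3 V4 [D1 D2 D3].
case Hcase: (~~ keptO t p && (p \notin Us)).
  case/andP: Hcase => nkp pU.
  have [h1 h2 h3 h4] := claim_new tT I pin pU pT nkp.
  exists Us0, b, (nx t p :: cl); split; last by rewrite Ssz.
  split=> //; split; first by rewrite /= h1 C1.
    by move=> u; rewrite inE => /orP[/eqP ->|]; [| exact: D2].
  move=> u; rewrite inE => /orP[/eqP -> Hu|]; last exact: D3.
  rewrite h4 nx_step //; split=> //.
  by rewrite (negbTE pnot).
have Hex : has (fun q => (q \notin Us) && ~~ keptO t q && (q != p)) (CA t).
  apply/negPn/negP => /hasPn Hn.
  have cov : {subset CA t <= [seq q <- CA t | keptO t q] ++ Us}.
    move=> q qin; rewrite mem_cat mem_filter qin andbT.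
    case: (eqVneq q p) => [->|ne].
      by move: Hcase; case: (keptO t p); case: (p \in Us).
    by move: (Hn q qin); rewrite ne andbT; case: (keptO t q); case: (q \in Us).
  have s1 := uniq_leq_size US cov.
  set L := sigma t.+1 :: ([seq q <- CA t | keptO t q] ++ map b Us).
  have Lsub : {subset L <= CO t.+1}.
    move=> x; rewrite in_cons mem_cat => /orP[/eqP ->|/orP[]].
    - exact: (run_req runO tT1).
    - rewrite mem_filter => /andP[kx xin].
      apply: (CO_stay (t:=t) (ltnW tT) kx).
      by rewrite leqnSn /=; apply: nx_far.
    - move/mapP => [y yU ->]; have [b1 b2 b3] := U3 y yU; apply: b3.
      have gy := nx_gt sigma y (ltnW tT).
      by rewrite leqnSn /=; exact: leq_ltn_trans gy b2.
  have LU1 : sigma t.+1 \notin [seq q <- CA t | keptO t q] by rewrite mem_filter negb_and ni orbT.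
  have LU2 : sigma t.+1 \notin map b Us.
    apply/mapP => -[y yU E]; have [b1 b2 b3] := U3 y yU.
    have gy := nx_gt sigma y (ltnW tT).
    have : sigma t.+1 != b y by apply: ne_far => //; exact: leq_ltn_trans gy b2.
    by rewrite E eqxx.
  have LU3 : ~~ has (mem [seq q <- CA t | keptO t q]) (map b Us).
    apply/hasPn => x /mapP [y yU ->]; rewrite /= mem_filter negb_and; apply/orP; right.
    by have [b1 _ _] := U3 y yU.
  have LU4 : uniq (map b Us) by rewrite map_inj_in_uniq // => y1 y2 h1 h2; apply: U4.
  have LU : uniq L by rewrite /L cons_uniq mem_cat negb_or LU1 LU2 cat_uniq filter_uniq // LU3 LU4.
  have s2 := uniq_leq_size LU Lsub.
  have s3 := sizeO (t:=t.+1) tT.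
  move: s1 s2 s3; rewrite /L /= !size_cat size_map sz.
  clear; lia.
case/hasP: Hex => z zin /andP[/andP[zU nkz] zp].
have zne : z != sigma t.+1 by apply/eqP => E; rewrite -E zin in ni.
have zne' : sigma t.+1 != z by rewrite eq_sym.
have zin' : z \in CA t.+1 by rewrite ECA inE (negbTE zne) /= mem_rem_neq.
have zlt : nx t z < nx t p.
  have := allP pmax z zin => /= zle; rewrite ltn_neqAle zle andbT.
  apply/eqP => E; have := nx_inj (ltnW tT) (ltnW tT) E (leq_trans zle pT).
  by move/eqP; rewrite (negbTE zp).
have zT : nx t z <= T by exact: leq_trans (ltnW zlt) pT.
set bz := if p \in Us then b p else p.
have Hbz : [/\ bz \notin CA t.+1, nx t.+1 z < nx t.+1 bz &
               forall t', t.+1 <= t' < nx t.+1 bz -> bz \in CO t'].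
  rewrite /bz; case pU: (p \in Us).
    have [b1 b2 b3] := U3 p pU.
    have nb : sigma t.+1 != b p by apply: ne_far => //; exact: leq_ltn_trans gp b2.
    rewrite !nx_step //; split.
    - by apply/negP => /sub; rewrite inE (negbTE b1) orbF eq_sym (negbTE nb).
    - exact: ltn_trans zlt b2.
    - move=> t' /andP[h1 h2]; apply: b3; by rewrite h2 andbT ltnW.
  have kp : keptO t p by move: Hcase; rewrite pU andbT; case: (keptO t p).
  rewrite !nx_step //; split=> //.
  move=> t' /andP[h1 h2]; apply: (CO_stay (t:=t) (ltnW tT) kp); by rewrite h2 andbT ltnW.
have [h1 h2 h3 h4] := claim_new tT I zin zU zT nkz.
exists (z :: Us0), (fun q => if q == z then bz else b q), (nx t z :: cl).
split; last by rewrite Ssz.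
have inUs0 y : y \in Us0 -> (y \in Us) && (y != z) && (y != p).
  rewrite mem_filter => /andP[/andP[_ yin] yU]; rewrite yU /=.
  apply/andP; split; first by apply/eqP => E; rewrite -E yU in zU.
  by apply/eqP => E; rewrite -E yin in pnot.
split.
- rewrite /= V1 andbT; apply/negP => /inUs0; by rewrite eqxx !andbF.
- by move=> y; rewrite inE => /orP[/eqP ->|]; [exact: zin' | exact: V2].
- move=> y; rewrite inE => /orP[/eqP ->|yU0]; first by rewrite eqxx.
  have /andP[/andP[_ yz] _] := inUs0 y yU0.
  by rewrite (negbTE yz); exact: V3 y yU0.
- have key y : y \in Us0 -> bz <> b y.
    move/inUs0 => /andP[/andP[yU yz] yp]; rewrite /bz; case pU: (p \in Us).
      by move=> E; move: (U4 _ _ pU yU E) => Ep; rewrite Ep eqxx in yp.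
    move=> E; have [b1 _ _] := U3 y yU; by rewrite -E pin in b1.
  move=> y1 y2; rewrite !inE => /orP[/eqP->|h1'] /orP[/eqP->|h2'] //=; rewrite ?eqxx.
  + have /andP[/andP[_ yz] _] := inUs0 y2 h2'; rewrite (negbTE yz) => E.
    by case: (key _ h2' E).
  + have /andP[/andP[_ yz] _] := inUs0 y1 h1'; rewrite (negbTE yz) => E.
    by case: (key _ h1' (esym E)).
  + have /andP[/andP[_ yz1] _] := inUs0 y1 h1'; have /andP[/andP[_ yz2] _] := inUs0 y2 h2'.
    by rewrite (negbTE yz1) (negbTE yz2); apply: V4.
split.
- by rewrite /= h1 C1.
- by move=> u; rewrite inE => /orP[/eqP ->|]; [| exact: D2].
- move=> u; rewrite inE => /orP[/eqP -> Hu|uin Hu].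
    by rewrite h4 nx_step //; split=> // _; exact: mem_head.
  have [e1 e2] := D3 u uin Hu; split=> // hin.
  by rewrite (e2 hin) orbT.
Qed.

Lemma inv_all t : t <= T -> exists Us b cl, Inv t Us b cl.
Proof.
elim: t => [|t IH] tT.
  exists [::], id, [::]; split=> //; split=> //.
case: (IH (ltnW tT)) => Us [b [cl I]].
case g: (good t.+1).
  exact: step_good tT I g.
by exists [seq y <- Us | (y != sigma t.+1) && (y \in CA t.+1)], b, cl; apply: step_keep.
Qed.

Lemma Part6 : count good (iota 1 T) <= count OMnc (iota 1 T).
Proof.
have [Us [b [cl [[_ _ _ _ [C1 C2 _]] Sz]]]] := inv_all (leqnn T).
rewrite -Sz -size_filter; apply: uniq_leq_size C1 _ => u uin.
have [h1 h2] := C2 u uin; by rewrite mem_filter h2 inI.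
Qed.
Definition mis e := if ev e is Some (p, r) then
  req r BlindOracle && (nx e.-1 p <= T) && ~~ all (fun q => nx e.-1 q <= nx e.-1 p) (CA e.-1)
  else false.

Lemma retB_split : count (retr BlindOracle) (iota 1 T) <=
  count good (iota 1 T) + count mis (iota 1 T).
Proof.
apply: count_pw2 => e _; rewrite /retr /good /mis.
case: (ev e) => [[p r]|//] /andP[-> ->] /=.
by case: (all _ _); rewrite ?orbT.
Qed.

Local Notation nu := (nu sigma T).
Local Notation lr := (last_req sigma).

Definition errs i := if nu i < omega i then iota (nu i).+1 (omega i - nu i)
                     else iota (omega i) (nu i - omega i).
Definition Units := flatten [seq [seq (i, u) | u <- errs i] | i <- iota 1 T].

Lemma size_Units : size Units = eta sigma omega T.
Proof.
have -> : size Units = \sum_(i <- iota 1 T) size (errs i).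
  rewrite /Units; elim: (iota 1 T) => [|i l IH]; first by rewrite big_nil.
  by rewrite big_cons /= size_cat size_map IH.
rewrite /eta /index_iota subSS subn0; apply: eq_bigr => i _.
rewrite /errs; case: ltnP => H; rewrite size_iota.
  have E : nu i - omega i = 0 by apply/eqP; rewrite subn_eq0 ltnW.
  by rewrite E add0n.
have E : omega i - nu i = 0 by apply/eqP; rewrite subn_eq0.
by rewrite E addn0.
Qed.

Definition chg e : nat * nat :=
  if ev e is Some (p, _) then
    let y := head p [seq q <- CA e.-1 | nx e.-1 p < nx e.-1 q] in
    if omega (lr e.-1 y) <= nu (lr e.-1 p) then (lr e.-1 y, nu (lr e.-1 p))
    else (lr e.-1 p, omega (lr e.-1 y))
  else (0, 0).

Definition keyv e := if ev e is Some (p, _) then nx e.-1 p else 0.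

Lemma ev_inj e1 e2 : e1 \in iota 1 T -> e2 \in iota 1 T ->
  keyv e1 = keyv e2 -> keyv e1 <= T ->
  (exists pr, ev e1 = Some pr) -> (exists pr, ev e2 = Some pr) -> e1 = e2.
Proof.
wlog le12 : e1 e2 / e1 <= e2.
  move=> W h1 h2 E K s1 s2; case: (leqP e1 e2) => H; first exact: W.
  by symmetry; apply: W => //; [exact: ltnW | rewrite -E].
rewrite !inI => h1 h2; rewrite /keyv.
move=> E K [[p1 r1] E1] [[p2 r2] E2]; rewrite E1 E2 in E K.
case: (ltngtP e1 e2) le12 => // lt _.
have [_ _ _ pin1 [_ _ pnot1]] := A_some h1 E1.
have [_ _ _ pin2 [_ _ _]] := A_some h2 E2.
have Ep : p1 = p2 by apply: (nx_inj (T:=T) (sigma:=sigma) _ _ E K); lia.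
subst p2.
have [w [Hw Ew]] := run_enter runA (a:=e1) (b:=e2.-1) ltac:(lia) pnot1 pin2.
have g := @nx_gt _ sigma T e2.-1 p1 ltac:(lia).
have m := @nx_min _ sigma T e1.-1 p1 w ltac:(lia); rewrite Ew eqxx in m.
have : e1.-1 < w < nx e1.-1 p1 by rewrite E; lia.
by move/m.
Qed.
Lemma mis_setup e : e \in iota 1 T -> mis e -> exists p y,
   [/\ ev e = Some (p, BlindOracle), nx e.-1 p <= T, nx e.-1 p < nx e.-1 y,
       omega (lr e.-1 y) <= omega (lr e.-1 p) &
       [/\ nu (lr e.-1 p) = nx e.-1 p, nu (lr e.-1 y) = nx e.-1 y, 0 < lr e.-1 p <= T,
           0 < lr e.-1 y <= T &
           y = head p [seq q <- CA e.-1 | nx e.-1 p < nx e.-1 q]]].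
Proof.
rewrite inI => eT; rewrite /mis; case Ee: (ev e) => [[p r]|//] /andP[/andP[/reqP Er pT] na].
subst r; have [Er ni sz pin [Hok ECA pnot]] := A_some eT Ee.
case: Hok => _ Hb.
pose y := head p [seq q <- CA e.-1 | nx e.-1 p < nx e.-1 q].
have yin : y \in [seq q <- CA e.-1 | nx e.-1 p < nx e.-1 q].
  rewrite /y; case E: [seq q <- CA e.-1 | _] => [|a l]; last exact: mem_head.
  move: na; rewrite -has_predC; move/hasP => [q qin qn].
  have : q \in [seq q <- CA e.-1 | nx e.-1 p < nx e.-1 q].
    by rewrite mem_filter qin andbT ltnNge.
  by rewrite E.
move: yin; rewrite mem_filter => /andP[yp yin].
have eT' : e.-1 <= T by lia.
have reqq q : q \in CA e.-1 -> exists w, 0 < w <= e.-1 /\ sigma w = q.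
  by move=> qin; apply: (run_requested runA eT' qin).
have lrb q : q \in CA e.-1 -> 0 < lr e.-1 q <= T.
  move=> qin; have [h1 _ _] := last_req_spec (reqq q qin); lia.
exists p, y; split=> //; first exact: Hb.
split.
- by apply: nu_last => //; apply: reqq.
- by apply: nu_last => //; apply: reqq.
- exact: lrb.
- exact: lrb.
- by [].
Qed.

Lemma mem_Units i u : 0 < i <= T -> u \in errs i -> (i, u) \in Units.
Proof.
move=> iT uin; apply/flattenP; exists [seq (i, u) | u <- errs i]; last exact: map_f.
by apply: (map_f (fun i => [seq (i, u) | u <- errs i])); rewrite inI.
Qed.

Lemma chg_Units e : e \in iota 1 T -> mis e -> chg e \in Units.
Proof.
move=> eI me; have [p [y [Ee pT lt Hw [n1 n2 b1 b2 Ey]]]] := mis_setup eI me.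
rewrite /chg Ee /= -Ey; case: leqP => H.
  apply: mem_Units => //; rewrite /errs ltnNge n2 (_ : omega (lr e.-1 y) <= nx e.-1 y) /=.
    by rewrite mem_iota; rewrite n1 in H; apply/andP; split; lia.
  by rewrite n1 in H; lia.
apply: mem_Units => //; rewrite /errs (_ : nu (lr e.-1 p) < omega (lr e.-1 p)).
  by rewrite mem_iota; apply/andP; split; lia.
lia.
Qed.

Lemma chg_key e1 e2 : e1 \in iota 1 T -> e2 \in iota 1 T -> mis e1 -> mis e2 ->
  chg e1 = chg e2 -> keyv e1 = keyv e2.
Proof.
move=> eI1 eI2 me1 me2.
have [p1 [y1 [Ee1 pT1 lt1 Hw1 [n11 n21 b11 b21 Ey1]]]] := mis_setup eI1 me1.
have [p2 [y2 [Ee2 pT2 lt2 Hw2 [n12 n22 b12 b22 Ey2]]]] := mis_setup eI2 me2.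
rewrite /keyv Ee1 Ee2 /chg Ee1 Ee2 /= -Ey1 -Ey2.
case: leqP => H1; case: leqP => H2 [E1 E2].
- by rewrite -n11 -n12 E2.
- exfalso; rewrite -E1 in H2 n12; lia.
- exfalso; rewrite E1 in H1 n11; lia.
- by rewrite -n11 -n12 E1.
Qed.

Lemma Part7 : count mis (iota 1 T) <= eta sigma omega T.
Proof.
rewrite -size_Units -size_filter.
have -> : size [seq e <- iota 1 T | mis e] = size (map chg [seq e <- iota 1 T | mis e]).
  by rewrite size_map.
apply: uniq_leq_size.
  rewrite map_inj_in_uniq; first by apply: filter_uniq; exact: iota_uniq.
  move=> e1 e2; rewrite !mem_filter => /andP[m1 i1] /andP[m2 i2] E.
  have K := chg_key i1 i2 m1 m2 E.
  have [p [y [Ee pT _ _ _]]] := mis_setup i1 m1.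
  have [p' [y' [Ee' _ _ _ _]]] := mis_setup i2 m2.
  apply: ev_inj => //; [by rewrite /keyv Ee | by exists (p, BlindOracle) | by exists (p', BlindOracle)].
move=> x /mapP [e]; rewrite mem_filter => /andP[me eI] ->; exact: chg_Units.
Qed.
Lemma Part8 : count compb (iota 1 T) + count OMnc (iota 1 T) <=
  count (fun t => sigma t \notin CO t.-1) (iota 1 T).
Proof.
rewrite -count_predUI.
have -> : count (predI compb OMnc) (iota 1 T) = 0.
  apply/eqP; rewrite -leqn0.
  have := @count_pw _ (predI compb OMnc) pred0 (iota 1 T); rewrite count_pred0; apply.
  by move=> t _; rewrite /= /compb /OMnc; case: (requested_before _ _); rewrite ?andbF.
rewrite addn0; apply: count_pw => t; rewrite inI => tT /orP[|/andP[]//].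
rewrite /compb => nr; apply/negP => inc.
have [w [Hw Ew]] := run_requested runO (t:=t.-1) ltac:(lia) inc.
move/negP: nr; apply; apply/rbP; exists w; split=> //; lia.
Qed.

Lemma final_bound : misses sigma T CA <= 3 * misses sigma T CO + 3 * eta sigma omega T.
Proof.
have h1 := Gall.
have h2 := retB_split.
have h3 := Part6.
have h4 := Part7.
have h5 := Part8.
rewrite /misses; rewrite /missA in h1.
move: h1 h2 h3 h4 h5.
set a := count _ (iota 1 T); set c := count compb _; set rb := count (retr _) _.
set g := count good _; set m := count mis _; set o := count OMnc _.
set mo := count (fun t => sigma t \notin CO t.-1) _; set et := eta _ _ _.
clear; lia.
Qed.
End Main.

Unset Implicit Arguments.

Theorem mainTheorem13 (P : eqType) (sigma : nat -> P) (omega : nat -> nat)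
    (k T : nat) (cacheB : nat -> seq P) (ev : nat -> option (P * rule))
    (cacheOPT : nat -> seq P) :
  AO_run sigma omega k T cacheB ev ->
  belady_run sigma k T cacheOPT ->
  misses sigma T cacheB <= 3 * misses sigma T cacheOPT + 3 * eta sigma omega T.
Proof. by move=> HA HO; apply: final_bound HA HO. Qed.
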